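(* Let $p,q\geq1$ be integers, $\alpha_0=\arctan\sqrt{q/p}$ and $P_0=(\alpha_0,\alpha_0)$. Let $(\vartheta(s),\alpha(s))$ be a trajectory of the differential system $$\dot\vartheta=3\sin\vartheta\cos\vartheta\sin(\alpha-\vartheta),\qquad \dot\alpha=q\cos\alpha\cos\vartheta-p\sin\alpha\sin\vartheta,$$ and suppose that for some $s_0$ one has $0<\vartheta(s_0)<\pi/2$ and $\vartheta(s_0)-\pi/2\leq\alpha(s_0)\leq\vartheta(s_0)+\pi/2$. Then $\lim_{s\to+\infty}(\vartheta(s),\alpha(s))=P_0$. *)

(* Defs.v *)
From Stdlib Require Import Reals.
From Coquelicot Require Import Coquelicot.
Open Scope R_scope.

Definition alpha0 (p q : nat) : R := atan (sqrt (INR q / INR p)).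

(* The vector field is smooth and globally bounded, so every maximal
   solution is defined on all of R. *)
Definition is_trajectory (p q : nat) (theta alpha : R -> R) : Prop :=
  forall s : R,
    is_derive theta s (3 * sin (theta s) * cos (theta s) * sin (alpha s - theta s)) /\
    is_derive alpha s (INR q * cos (alpha s) * cos (theta s)
                       - INR p * sin (alpha s) * sin (theta s)).

(* Main.v *)
Require Import Defs.
From Stdlib Require Import Reals Lra Lia Psatz Classical.
From Coquelicot Require Import Coquelicot.
Open Scope R_scope.

Lemma D_eq (f : R -> R) (x l l' : R) : is_derive f x l -> l = l' -> is_derive f x l'.
Proof. intros H ->. exact H. Qed.
Lemma D_mult (f g : R -> R) (x df dg : R) : is_derive f x df -> is_derive g x dg ->
  is_derive (fun t => f t * g t) x (df * g x + f x * dg).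
Proof. intros. apply (is_derive_mult f g); auto. intros; apply Rmult_comm. Qed.
Lemma D_minus (f g : R -> R) (x df dg : R) : is_derive f x df -> is_derive g x dg ->
  is_derive (fun t => f t - g t) x (df - dg).
Proof. intros. apply (is_derive_minus f g); auto. Qed.
Lemma D_sin (f : R -> R) (x df : R) : is_derive f x df -> is_derive (fun t => sin (f t)) x (cos (f x) * df).
Proof. intros H. eapply D_eq. apply (is_derive_comp sin f). apply is_derive_sin. exact H.
  simpl. unfold scal; simpl; unfold mult; simpl. ring. Qed.
Lemma D_cos (f : R -> R) (x df : R) : is_derive f x df -> is_derive (fun t => cos (f t)) x (- sin (f x) * df).
Proof. intros H. eapply D_eq. apply (is_derive_comp cos f). apply is_derive_cos. exact H.
  simpl. unfold scal; simpl; unfold mult; simpl. ring. Qed.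
Lemma D_exp6 x : is_derive (fun t => exp (6 * t)) x (6 * exp (6 * x)).
Proof. eapply D_eq. apply (is_derive_comp exp (fun t => 6 * t)). apply is_derive_exp.
  eapply D_eq. apply is_derive_scal. apply is_derive_id. reflexivity.
  simpl. unfold scal; simpl; unfold mult; simpl. unfold one; simpl. ring. Qed.
Lemma D_pow (f : R -> R) n (x df : R) : is_derive f x df -> is_derive (fun t => f t ^ n) x (INR n * df * f x ^ pred n).
Proof. apply is_derive_pow. Qed.

Lemma der_cont (f df : R -> R) : (forall x, is_derive f x (df x)) -> continuity f.
Proof. intros H x. apply continuity_pt_filterlim. apply (ex_derive_continuous f x).
  exists (df x). apply H. Qed.

Lemma mvt_lo (f df : R -> R) a b m : a <= b -> (forall x, is_derive f x (df x)) ->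
  (forall x, a <= x <= b -> m <= df x) -> m * (b - a) <= f b - f a.
Proof. intros Hab Hd Hm.
  destruct (MVT_gen f a b df) as [c [Hc E]].
  - intros; apply Hd.
  - intros; apply der_cont with df; auto.
  - rewrite E. rewrite Rmin_left in Hc by lra. rewrite Rmax_right in Hc by lra.
    apply Rmult_le_compat_r. lra. apply Hm. lra. Qed.

Lemma mvt_hi (f df : R -> R) a b m : a <= b -> (forall x, is_derive f x (df x)) ->
  (forall x, a <= x <= b -> df x <= m) -> f b - f a <= m * (b - a).
Proof. intros Hab Hd Hm.
  destruct (MVT_gen f a b df) as [c [Hc E]].
  - intros; apply Hd.
  - intros; apply der_cont with df; auto.
  - rewrite E. rewrite Rmin_left in Hc by lra. rewrite Rmax_right in Hc by lra.
    apply Rmult_le_compat_r. lra. apply Hm. lra. Qed.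

Lemma ivt (f : R -> R) a b y : continuity f -> a <= b ->
  Rmin (f a) (f b) <= y <= Rmax (f a) (f b) -> exists x, a <= x <= b /\ f x = y.
Proof. intros Hc Hab Hy. destruct (IVT_gen f a b y Hc Hy) as [x [Hx E]].
  exists x. rewrite Rmin_left in Hx by lra. rewrite Rmax_right in Hx by lra. auto. Qed.

Lemma jordan x : 0 <= x <= PI/2 -> x/3 <= sin x.
Proof. intros [H0 H1]. assert (HP := PI_4). destruct (SIN x H0 ltac:(lra)) as [H _].
unfold sin_lb, sin_approx, sin_term in H. simpl in H.
assert (x <= 2) by lra.
assert (A: 0 <= x*x*x*x*x*(4 - x*x)).
{ apply Rmult_le_pos. repeat apply Rmult_le_pos; lra. nra. }
assert (B: 0 <= x*(4 - x*x)) by (apply Rmult_le_pos; nra).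
assert (C: 0 <= x*x*x*x*x) by (repeat apply Rmult_le_pos; lra).
lra. Qed.

Lemma sin_le_id x : 0 <= x <= PI/2 -> sin x <= x.
Proof. intros [H0 H1].
  pose proof (mvt_hi sin cos 0 x 1 H0 is_derive_sin (fun t _ => proj2 (COS_bound t))).
  rewrite sin_0 in H. lra. Qed.

Lemma jordan_abs x : Rabs x <= PI/2 -> Rabs x / 3 <= Rabs (sin x) <= Rabs x.
Proof. intros H. destruct (Rle_or_lt 0 x).
 - rewrite Rabs_right in * by lra. assert (0 <= sin x) by (pose proof (jordan x); lra).
   rewrite Rabs_right by lra. split. apply jordan; lra. apply sin_le_id; lra.
 - rewrite Rabs_left in * by lra.
   assert (sin x = - sin (-x)) by (rewrite sin_neg; ring).
   assert (-x/3 <= sin (-x)) by (apply jordan; lra).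
   assert (sin (-x) <= -x) by (apply sin_le_id; lra).
   rewrite H1, Rabs_left by lra. lra. Qed.

Lemma dU p q th al s : is_trajectory p q th al ->
  is_derive (fun t => al t - th t) s
   (cos (al s - th s) * (INR q * cos (th s)^2 - INR p * sin (th s)^2)
    - (INR q + INR p + 3) * sin (th s) * cos (th s) * sin (al s - th s)).
Proof. intros H. destruct (H s) as [Ht Ha].
  eapply D_eq. apply D_minus. exact Ha. exact Ht.
  set (u := al s - th s).
  assert (E: al s = th s + u) by (unfold u; ring). rewrite E, cos_plus, sin_plus. ring. Qed.

Definition Qf p q (th al : R -> R) s := sin (th s) ^ q * cos (th s) ^ p * cos (al s - th s) ^ 3.

Lemma dQ p q th al s : (1 <= p)%nat -> (1 <= q)%nat -> is_trajectory p q th al ->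
  is_derive (Qf p q th al) s
   (3 * (INR q + INR p + 3) * sin (th s) ^ S q * cos (th s) ^ S p
     * cos (al s - th s) ^ 2 * sin (al s - th s) ^ 2).
Proof. intros hp hq H. destruct (H s) as [Ht _]. pose proof (dU p q th al s H) as Hu.
  unfold Qf.
  eapply D_eq. apply D_mult. apply D_mult.
  apply D_pow. apply D_sin. exact Ht.
  apply D_pow. apply D_cos. exact Ht.
  apply D_pow. apply D_cos. exact Hu.
  destruct p as [|p]; [lia|]. destruct q as [|q]; [lia|].
  cbn [pow pred]. replace (INR 3) with 3 by (simpl; ring). ring. Qed.

Definition Gf (th : R -> R) s := (sin (th s) * cos (th s)) ^ 2 * exp (6 * s).

Lemma dG p q th al s : is_trajectory p q th al ->
  is_derive (Gf th) s (6 * (sin (th s) * cos (th s)) ^ 2 * exp (6 * s) *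
     ((cos (th s) ^ 2 - sin (th s) ^ 2) * sin (al s - th s) + 1)).
Proof. intros H. destruct (H s) as [Ht _]. unfold Gf.
  eapply D_eq. apply D_mult. apply D_pow. apply D_mult. apply D_sin. exact Ht.
  apply D_cos. exact Ht. apply D_exp6.
  simpl. ring. Qed.

Lemma G_incr p q th al a b : is_trajectory p q th al -> a <= b -> Gf th a <= Gf th b.
Proof. intros H Hab.
  pose proof (mvt_lo (Gf th) (fun s => 6 * (sin (th s) * cos (th s)) ^ 2 * exp (6 * s) *
     ((cos (th s) ^ 2 - sin (th s) ^ 2) * sin (al s - th s) + 1)) a b 0 Hab (fun s => dG p q th al s H)) as K.
  cut (0 * (b - a) <= Gf th b - Gf th a). lra. apply K.
  intros x _. set (S := sin (th x)). set (C := cos (th x)). set (W := sin (al x - th x)).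
  assert (HSC : S^2 + C^2 = 1) by (pose proof (sin2_cos2 (th x)) as E; unfold Rsqr in E; unfold S, C; nra).
  assert (HW := SIN_bound (al x - th x)). fold W in HW.
  assert (0 <= (C^2 - S^2) * W + 1).
  { assert (0 <= S^2) by nra. assert (0 <= C^2) by nra. nra. }
  apply Rmult_le_pos; [|exact H0].
  apply Rmult_le_pos. apply Rmult_le_pos. lra. nra. left; apply exp_pos. Qed.

Lemma theta_cont p q th al : is_trajectory p q th al -> continuity th.
Proof. intros H. apply (der_cont th (fun s => 3 * sin (th s) * cos (th s) * sin (al s - th s))).
  intros x. apply (H x). Qed.

Lemma alpha_cont p q th al : is_trajectory p q th al -> continuity al.
Proof. intros H. apply (der_cont al (fun s => INR q * cos (al s) * cos (th s) - INR p * sin (al s) * sin (th s))).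
  intros x. apply (H x). Qed.

Lemma theta_stay p q th al s0 : is_trajectory p q th al -> 0 < th s0 < PI/2 ->
  forall s, s0 <= s -> 0 < th s < PI/2.
Proof. intros H [h1 h2] s Hs. pose proof PI_RGT_0.
  assert (G0 : 0 < Gf th s0).
  { unfold Gf. apply Rmult_lt_0_compat; [|apply exp_pos].
    assert (0 < sin (th s0)) by (apply sin_gt_0; lra).
    assert (0 < cos (th s0)) by (apply cos_gt_0; lra). apply pow_lt; apply Rmult_lt_0_compat; auto. }
  assert (Gt : forall t, s0 <= t -> sin (th t) * cos (th t) <> 0).
  { intros t Ht E. pose proof (G_incr p q th al s0 t H Ht) as Hg.
    assert (Gf th t = 0) by (unfold Gf; rewrite E; simpl; ring). lra. }
  pose proof (theta_cont p q th al H) as Hc.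
  destruct (Rle_or_lt (th s) 0) as [E|E].
  { destruct (ivt th s0 s 0 Hc Hs ltac:(rewrite Rmin_right, Rmax_left; lra)) as [t [Ht Et]].
    exfalso; apply (Gt t ltac:(lra)). rewrite Et, sin_0. ring. }
  destruct (Rle_or_lt (PI/2) (th s)) as [E2|E2]; [|lra].
  destruct (ivt th s0 s (PI/2) Hc Hs ltac:(rewrite Rmin_left, Rmax_right; lra)) as [t [Ht Et]].
  exfalso; apply (Gt t ltac:(lra)). rewrite Et, cos_PI2. ring. Qed.

Lemma deriv_neg (f : R -> R) (x l : R) : is_derive f x l -> l < 0 -> forall r, 0 < r ->
  exists h, 0 < h /\ f (x+h) < f x /\ f x - r < f (x+h).
Proof. intros Hd Hl r Hr. apply is_derive_Reals in Hd.
  destruct (Hd (-l/2) ltac:(lra)) as [d Hdd].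
  set (h := Rmin (d/2) (r/(2*(-l)))).
  assert (Hh0 : 0 < h) by (unfold h; apply Rmin_glb_lt; [pose proof (cond_pos d); lra | apply Rdiv_lt_0_compat; lra]).
  assert (Hh1 : h <= d/2) by apply Rmin_l.
  assert (Hh2 : h <= r/(2*(-l))) by apply Rmin_r.
  assert (Hh3 : h * (2*(-l)) <= r).
  { apply Rmult_le_compat_r with (r := 2*(-l)) in Hh2; [|lra].
    unfold Rdiv in Hh2. rewrite Rmult_assoc, Rinv_l in Hh2 by lra. lra. }
  specialize (Hdd h ltac:(lra) ltac:(rewrite Rabs_right; pose proof (cond_pos d); lra)).
  exists h. split; [lra|].
  apply Rabs_def2 in Hdd. destruct Hdd as [A B].
  set (D := f (x+h) - f x) in *.
  assert (E : D = (D/h) * h) by (field; lra). unfold D in *. clearbody h. set (Y := f (x+h)) in *. set (X := f x) in *. clearbody X Y.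
  clear D. assert (Hz: (Y-X)/h < l/2 /\ 3*l/2 < (Y-X)/h) by lra.
  set (Z := (Y-X)/h) in *. clearbody Z.
  split; nra. Qed.

Lemma Q_incr p q th al s0 a b : (1 <= p)%nat -> (1 <= q)%nat -> is_trajectory p q th al ->
  0 < th s0 < PI/2 -> s0 <= a -> a <= b -> Qf p q th al a <= Qf p q th al b.
Proof. intros hp hq H h0 Ha Hab.
  pose proof (mvt_lo (Qf p q th al) (fun s => 3 * (INR q + INR p + 3) * sin (th s) ^ S q * cos (th s) ^ S p
     * cos (al s - th s) ^ 2 * sin (al s - th s) ^ 2) a b 0 Hab (fun s => dQ p q th al s hp hq H)) as K.
  cut (0 * (b - a) <= Qf p q th al b - Qf p q th al a). lra. apply K.
  intros x Hx. destruct (theta_stay p q th al s0 H h0 x ltac:(lra)) as [A B].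
  pose proof PI_RGT_0.
  assert (0 < sin (th x)) by (apply sin_gt_0; lra).
  assert (0 < cos (th x)) by (apply cos_gt_0; lra).
  assert (0 <= INR q) by apply pos_INR. assert (0 <= INR p) by apply pos_INR.
  cbv beta.
  apply Rmult_le_pos; [|apply pow2_ge_0].
  apply Rmult_le_pos; [|apply pow2_ge_0].
  apply Rmult_le_pos; [|apply pow_le; lra].
  apply Rmult_le_pos; [|apply pow_le; lra]. lra. Qed.

Lemma start p q th al s0 : is_trajectory p q th al -> 0 < th s0 < PI/2 ->
  th s0 - PI/2 <= al s0 <= th s0 + PI/2 ->
  exists s1, s0 <= s1 /\ - (PI/2) < al s1 - th s1 < PI/2.
Proof. intros H h0 [h3 h4]. pose proof PI_RGT_0.
  assert (0 < sin (th s0)) by (apply sin_gt_0; lra).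
  assert (0 < cos (th s0)) by (apply cos_gt_0; lra).
  assert (0 <= INR q) by apply pos_INR. assert (0 <= INR p) by apply pos_INR.
  pose proof (dU p q th al s0 H) as Hu.
  destruct (Rle_lt_or_eq_dec _ _ h4) as [E4|E4].
  2:{ assert (Eu : al s0 - th s0 = PI/2) by lra. rewrite Eu, cos_PI2, sin_PI2 in Hu.
      assert (L: 0 * (INR q * cos (th s0) ^ 2 - INR p * sin (th s0) ^ 2) - (INR q + INR p + 3) * sin (th s0) * cos (th s0) * 1 < 0). { assert (0 < sin (th s0) * cos (th s0)) by nra. nra. }
      destruct (deriv_neg (fun t => al t - th t) s0 _ Hu L PI H0) as [h [Hh [A B]]].
      exists (s0 + h). cbv beta in A, B. split; lra. }
  destruct (Rle_lt_or_eq_dec _ _ h3) as [E3|E3].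
  2:{ assert (Eu : al s0 - th s0 = - (PI/2)) by lra. rewrite Eu, cos_neg, sin_neg, cos_PI2, sin_PI2 in Hu.
      assert (Hv : is_derive (fun t => th t - al t) s0 (- ((INR q + INR p + 3) * sin (th s0) * cos (th s0)))).
      { destruct (H s0) as [Ht Ha]. eapply D_eq. apply D_minus. exact Ht. exact Ha.
        pose proof (is_derive_unique _ _ _ Hu) as U1.
        assert (U2 := is_derive_unique _ _ _ (D_minus _ _ s0 _ _ Ha Ht)).
        rewrite U1 in U2. lra. }
      assert (L: - ((INR q + INR p + 3) * sin (th s0) * cos (th s0)) < 0) by (assert (0 < sin (th s0) * cos (th s0)) by nra; nra).
      destruct (deriv_neg (fun t => th t - al t) s0 _ Hv L PI H0) as [h [Hh [A B]]].
      exists (s0 + h). cbv beta in A, B. split; lra. }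
  exists s0. split; lra. Qed.

Lemma pow_le1 x n : 0 <= x <= 1 -> x ^ n <= 1.
Proof. intros H. rewrite <- (pow1 n). apply pow_incr. lra. Qed.

Lemma fac (S C Z Q1 : R) (q p : nat) : 0 < S <= 1 -> 0 < C <= 1 -> -1 <= Z <= 1 ->
  (1 <= q)%nat -> (1 <= p)%nat -> 0 < Q1 -> Q1 <= S^q * C^p * Z^3 ->
  Q1 <= S /\ Q1 <= C /\ Q1 <= Z /\ S^q * C^p * Z^3 <= 1.
Proof. intros HS HC HZ hq hp HQ H.
  destruct q as [|q]; [lia|]. destruct p as [|p]; [lia|].
  assert (a1 : 0 < S^q) by (apply pow_lt; lra). assert (a2 : S^q <= 1) by (apply pow_le1; lra).
  assert (b1 : 0 < C^p) by (apply pow_lt; lra). assert (b2 : C^p <= 1) by (apply pow_le1; lra).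
  simpl in H. simpl.
  set (a := S^q) in *. set (b := C^p) in *. clearbody a b.
  assert (Zp : 0 < Z).
  { destruct (Rlt_or_le 0 Z) as [K|K]; auto.
    assert (0 <= Z*Z) by nra. assert (Z*(Z*(Z*1)) <= 0) by nra.
    assert (0 < S*a) by nra. assert (0 < C*b) by nra. assert (0 < S*a*(C*b)) by nra.
    assert (S*a*(C*b)*(Z*(Z*(Z*1))) <= 0) by nra. lra. }
  assert (z3 : Z*(Z*(Z*1)) <= Z) by nra.
  assert (0 < Z*Z) by nra. assert (z4 : 0 < Z*(Z*(Z*1))) by nra.
  assert (Sa : S*a <= S) by nra. assert (Cb : C*b <= C) by nra.
  assert (0 < S*a) by nra. assert (0 < C*b) by nra.
  assert (S*a <= 1) by nra. assert (C*b <= 1) by nra.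
  assert (P1 : S*a*(C*b) <= S*a) by nra.
  assert (P2 : S*a*(C*b) <= C*b) by nra.
  assert (0 < S*a*(C*b)) by nra.
  assert (P3 : S*a*(C*b)*(Z*(Z*(Z*1))) <= S*a*(C*b)) by nra.
  assert (P4 : S*a*(C*b)*(Z*(Z*(Z*1))) <= Z*(Z*(Z*1))) by nra.
  repeat split; nra. Qed.

Lemma region p q th al s0 s1 : (1 <= p)%nat -> (1 <= q)%nat -> is_trajectory p q th al ->
  0 < th s0 < PI/2 -> s0 <= s1 -> - (PI/2) < al s1 - th s1 < PI/2 ->
  0 < Qf p q th al s1 /\
  forall s, s1 <= s -> Qf p q th al s1 <= sin (th s) /\ Qf p q th al s1 <= cos (th s) /\
     Qf p q th al s1 <= cos (al s - th s) /\ - (PI/2) < al s - th s < PI/2 /\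
     Qf p q th al s1 <= Qf p q th al s /\ Qf p q th al s <= 1.
Proof. intros hp hq H h0 Hs1 Hu1. pose proof PI_RGT_0.
  set (Q1 := Qf p q th al s1).
  assert (Hpos : forall s, s0 <= s -> 0 < sin (th s) <= 1 /\ 0 < cos (th s) <= 1).
  { intros s Hs. destruct (theta_stay p q th al s0 H h0 s Hs).
    split; split; try apply SIN_bound; try apply COS_bound.
    apply sin_gt_0; lra. apply cos_gt_0; lra. }
  assert (Q1p : 0 < Q1).
  { unfold Q1, Qf. destruct (Hpos s1 Hs1) as [[A _] [B _]].
    assert (0 < cos (al s1 - th s1)) by (apply cos_gt_0; lra).
    apply Rmult_lt_0_compat; [apply Rmult_lt_0_compat|]; apply pow_lt; auto. }
  assert (Main : forall s, s1 <= s -> Q1 <= Qf p q th al s /\ Qf p q th al s <= 1 /\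
     Q1 <= sin (th s) /\ Q1 <= cos (th s) /\ Q1 <= cos (al s - th s)).
  { intros s Hs. assert (HQ : Q1 <= Qf p q th al s) by (apply (Q_incr p q th al s0); auto; lra).
    destruct (Hpos s ltac:(lra)) as [[S0 S1] [C0 C1]].
    set (S := sin (th s)) in *. set (C := cos (th s)) in *. set (Z := cos (al s - th s)).
    assert (Zb := COS_bound (al s - th s)). fold Z in Zb.
    unfold Qf in HQ. fold S C Z in HQ.
    destruct (fac S C Z Q1 q p ltac:(lra) ltac:(lra) Zb hq hp Q1p HQ) as [F1 [F2 [F3 F4]]].
    repeat split; auto. }
  split; auto. intros s Hs. destruct (Main s Hs) as [M1 [M2 [M3 [M4 M5]]]].
  repeat split; auto.
  - destruct (Rle_or_lt (al s - th s) (- (PI/2))) as [E|E]; auto.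
    assert (Hc : continuity (fun t => al t - th t)).
    { apply (continuity_minus al th). apply (alpha_cont p q th al H). apply (theta_cont p q th al H). }
    destruct (ivt (fun t => al t - th t) s1 s (-(PI/2)) Hc Hs ltac:(rewrite Rmin_right, Rmax_left; lra)) as [t [Ht Et]].
    destruct (Main t ltac:(lra)) as [_ [_ [_ [_ K]]]]. rewrite Et, cos_neg, cos_PI2 in K. lra.
  - destruct (Rlt_or_le (al s - th s) (PI/2)) as [E|E]; auto.
    assert (Hc : continuity (fun t => al t - th t)).
    { apply (continuity_minus al th). apply (alpha_cont p q th al H). apply (theta_cont p q th al H). }
    destruct (ivt (fun t => al t - th t) s1 s (PI/2) Hc Hs ltac:(rewrite Rmin_left, Rmax_right; lra)) as [t [Ht Et]].
    destruct (Main t ltac:(lra)) as [_ [_ [_ [_ K]]]]. rewrite Et, cos_PI2 in K. lra.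
Qed.

Definition Ud p q (th al : R -> R) s :=
  cos (al s - th s) * (INR q * cos (th s)^2 - INR p * sin (th s)^2)
    - (INR q + INR p + 3) * sin (th s) * cos (th s) * sin (al s - th s).

Lemma Ud_bound p q th al s : Rabs (Ud p q th al s) <= 2 * (INR q + INR p) + 3.
Proof. unfold Ud. assert (0 <= INR q) by apply pos_INR. assert (0 <= INR p) by apply pos_INR.
  set (S := sin (th s)). set (C := cos (th s)). set (Z := cos (al s - th s)). set (W := sin (al s - th s)).
  assert (HSC : S^2 + C^2 = 1) by (pose proof (sin2_cos2 (th s)) as E; unfold Rsqr in E; unfold S, C; nra).
  pose proof (SIN_bound (al s - th s)). pose proof (COS_bound (al s - th s)). fold Z W in H1, H2.
  assert (k1 : Rabs (INR q * C^2 - INR p * S^2) <= INR q + INR p).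
  { assert (0 <= S^2) by nra. assert (0 <= C^2) by nra. apply Rabs_le. nra. }
  assert (k2 : Rabs (S*C) <= 1).
  { apply Rabs_le. nra. }
  assert (k3 : Rabs (Z * (INR q * C^2 - INR p * S^2)) <= INR q + INR p).
  { rewrite Rabs_mult. assert (Rabs Z <= 1) by (apply Rabs_le; lra).
    assert (0 <= Rabs (INR q * C ^ 2 - INR p * S ^ 2)) by apply Rabs_pos.
    assert (0 <= Rabs Z) by apply Rabs_pos. nra. }
  assert (k4 : Rabs ((INR q + INR p + 3) * S * C * W) <= INR q + INR p + 3).
  { replace ((INR q + INR p + 3) * S * C * W) with ((INR q + INR p + 3) * ((S * C) * W)) by ring.
    rewrite Rabs_mult, (Rabs_right (INR q + INR p + 3)) by lra. rewrite Rabs_mult.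
    assert (Rabs W <= 1) by (apply Rabs_le; lra).
    assert (0 <= Rabs (S*C)) by apply Rabs_pos. assert (0 <= Rabs W) by apply Rabs_pos.
    assert (Rabs (S*C) * Rabs W <= 1) by nra. nra. }
  pose proof (Rabs_triang (Z * (INR q * C ^ 2 - INR p * S ^ 2)) (- ((INR q + INR p + 3) * S * C * W))).
  rewrite Rabs_Ropp in H3. unfold Rminus in *. lra. Qed.

Lemma U_lip p q th al a b : is_trajectory p q th al -> a <= b ->
  Rabs ((al b - th b) - (al a - th a)) <= (2 * (INR q + INR p) + 3) * (b - a).
Proof. intros H Hab. apply Rabs_le. split.
  - assert (K := mvt_lo (fun t => al t - th t) (Ud p q th al) a b (- (2 * (INR q + INR p) + 3)) Hab
      (fun s => dU p q th al s H) (fun x _ => proj1 (proj1 (Rabs_le_between _ _) (Ud_bound p q th al x)))).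
    simpl in K. lra.
  - assert (K := mvt_hi (fun t => al t - th t) (Ud p q th al) a b ((2 * (INR q + INR p) + 3)) Hab
      (fun s => dU p q th al s H) (fun x _ => proj2 (proj1 (Rabs_le_between _ _) (Ud_bound p q th al x)))).
    simpl in K. lra. Qed.

Lemma prod_mono (a b c d a' b' c' d' : R) : 0 <= a <= a' -> 0 <= b <= b' -> 0 <= c <= c' -> 0 <= d <= d' ->
  a * b * c * d <= a' * b' * c' * d'.
Proof. intros. apply Rmult_le_compat; try apply Rmult_le_pos; try apply Rmult_le_pos; try lra.
  apply Rmult_le_compat; try apply Rmult_le_pos; try lra.
  apply Rmult_le_compat; lra. Qed.

Lemma stepA p q th al s0 s1 : (1 <= p)%nat -> (1 <= q)%nat -> is_trajectory p q th al ->
  0 < th s0 < PI/2 -> s0 <= s1 -> - (PI/2) < al s1 - th s1 < PI/2 ->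
  forall eps, 0 < eps -> exists N, s1 <= N /\ forall t, N <= t -> Rabs (al t - th t) < eps.
Proof. intros hp hq H h0 Hs1 Hu1 eps Heps.
  destruct (region p q th al s0 s1 hp hq H h0 Hs1 Hu1) as [Q1p Rg].
  set (Q1 := Qf p q th al s1) in *. clearbody Q1.
  assert (0 <= INR q) by apply pos_INR. assert (0 <= INR p) by apply pos_INR.
  set (B := 2 * (INR q + INR p) + 3).
  assert (HB : 0 < B) by (unfold B; lra).
  set (d := eps / (2 * B)).
  assert (Hd : 0 < d) by (unfold d; apply Rdiv_lt_0_compat; lra).
  assert (HdB : B * d = eps / 2) by (unfold d; field; lra).
  set (c0 := 3 * Q1 ^ S q * Q1 ^ S p * Q1 ^ 2).
  assert (Hc0 : 0 < c0) by (unfold c0; repeat apply Rmult_lt_0_compat; try lra; apply pow_lt; lra).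
  set (eta := c0 * (eps/6)^2 * d).
  assert (Heta : 0 < eta) by (unfold eta; apply Rmult_lt_0_compat; [apply Rmult_lt_0_compat; [lra | apply pow_lt; lra] | lra]).
  apply NNPP; intro Hn.
  assert (Hinf : forall N, exists t, N <= t /\ eps <= Rabs (al t - th t)).
  { intro N. apply NNPP; intro K. apply Hn. exists (Rmax N s1). split. apply Rmax_r.
    intros t Ht. apply Rnot_le_lt; intro E. apply K. exists t. split; [|exact E].
    eapply Rle_trans; [apply Rmax_l | exact Ht]. }
  assert (Step : forall N, s1 <= N -> exists t', N <= t' /\ Qf p q th al N + eta <= Qf p q th al t').
  { intros N HN. destruct (Hinf N) as [t [Ht Et]]. exists (t + d). split. lra.
    assert (QNt : Qf p q th al N <= Qf p q th al t) by (apply (Q_incr p q th al s0); auto; lra).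
    cut (c0 * (eps/6)^2 * ((t + d) - t) <= Qf p q th al (t + d) - Qf p q th al t).
    { replace (t + d - t) with d by ring. fold eta. lra. }
    apply (mvt_lo (Qf p q th al) (fun s => 3 * (INR q + INR p + 3) * sin (th s) ^ S q * cos (th s) ^ S p
     * cos (al s - th s) ^ 2 * sin (al s - th s) ^ 2) t (t+d) _ ltac:(lra) (fun s => dQ p q th al s hp hq H)).
    intros x Hx. destruct (Rg x ltac:(lra)) as [R1 [R2 [R3 [R4 _]]]]. 
    pose proof (U_lip p q th al t x H ltac:(lra)) as L. fold B in L.
    assert (Ux : eps/2 <= Rabs (al x - th x)).
    { assert (B * (x - t) <= B * d) by (apply Rmult_le_compat_l; lra).
      pose proof (Rabs_triang_inv (al t - th t) (al x - th x)).
      rewrite Rabs_minus_sym in L. lra. }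
    assert (Wx : eps/6 <= Rabs (sin (al x - th x))).
    { assert (Rabs (al x - th x) <= PI/2) by (apply Rabs_le; lra).
      pose proof (jordan_abs _ H2). lra. }
    rewrite <- (pow2_abs (sin (al x - th x))).
    unfold c0. cbv beta.
    replace (3 * (INR q + INR p + 3) * sin (th x) ^ S q * cos (th x) ^ S p * cos (al x - th x) ^ 2 *
       Rabs (sin (al x - th x)) ^ 2) with
      (3 * (INR q + INR p + 3) * (sin (th x) ^ S q * cos (th x) ^ S p * cos (al x - th x) ^ 2 *
       Rabs (sin (al x - th x)) ^ 2)) by ring.
    replace (3 * Q1 ^ S q * Q1 ^ S p * Q1 ^ 2 * (eps / 6) ^ 2) with
      (3 * (Q1 ^ S q * Q1 ^ S p * Q1 ^ 2 * (eps / 6) ^ 2)) by ring.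
    assert (P : Q1 ^ S q * Q1 ^ S p * Q1 ^ 2 * (eps / 6) ^ 2 <=
      sin (th x) ^ S q * cos (th x) ^ S p * cos (al x - th x) ^ 2 * Rabs (sin (al x - th x)) ^ 2).
    { apply prod_mono; split; try (apply pow_le; lra); apply pow_incr; lra. }
    assert (0 <= Q1 ^ S q * Q1 ^ S p * Q1 ^ 2 * (eps / 6) ^ 2).
    { apply Rmult_le_pos; [apply Rmult_le_pos; [apply Rmult_le_pos|]|]; apply pow_le; lra. }
    nra. }
  assert (Ind : forall m, exists t, s1 <= t /\ Q1 + INR m * eta <= Qf p q th al t).
  { induction m as [|m [t [Ht Et]]].
    - exists s1. simpl. destruct (Rg s1 (Rle_refl _)) as [_ [_ [_ [_ [K _]]]]]. split; lra.
    - destruct (Step t Ht) as [t' [Ht' Et']]. exists t'. split. lra.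
      rewrite S_INR. lra. }
  destruct (INR_archimed eta 1 Heta) as [m Hm].
  destruct (Ind m) as [t [Ht Et]]. destruct (Rg t Ht) as [_ [_ [_ [_ [_ Q1t]]]]]. lra.
Qed.

Definition Kf p q (th : R -> R) s := INR q * cos (th s) ^ 2 - INR p * sin (th s) ^ 2.

Lemma dK p q th al s : is_trajectory p q th al ->
  is_derive (Kf p q th) s (- 6 * (INR q + INR p) * sin (th s) ^ 2 * cos (th s) ^ 2 * sin (al s - th s)).
Proof. intros H. destruct (H s) as [Ht _]. unfold Kf.
  eapply D_eq. apply D_minus. apply is_derive_scal. apply D_pow. apply D_cos. exact Ht.
  apply is_derive_scal. apply D_pow. apply D_sin. exact Ht.
  simpl. ring. Qed.

Lemma K_lip p q th al a b : is_trajectory p q th al -> a <= b ->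
  Rabs (Kf p q th b - Kf p q th a) <= 6 * (INR q + INR p) * (b - a).
Proof. intros H Hab.
  assert (Bd : forall x, Rabs (- 6 * (INR q + INR p) * sin (th x) ^ 2 * cos (th x) ^ 2 * sin (al x - th x)) <= 6 * (INR q + INR p)).
  { intros x. assert (0 <= INR q) by apply pos_INR. assert (0 <= INR p) by apply pos_INR.
    replace (- 6 * (INR q + INR p) * sin (th x) ^ 2 * cos (th x) ^ 2 * sin (al x - th x))
      with (- (6 * (INR q + INR p)) * ((sin (th x) ^ 2 * cos (th x) ^ 2) * sin (al x - th x))) by ring.
    rewrite Rabs_mult, Rabs_Ropp, Rabs_right by lra. rewrite Rabs_mult.
    pose proof (SIN_bound (th x)). pose proof (COS_bound (th x)). pose proof (SIN_bound (al x - th x)).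
    assert (Rabs (sin (th x) ^ 2 * cos (th x) ^ 2) <= 1).
    { apply Rabs_le. split. assert (0 <= sin (th x) ^ 2 * cos (th x) ^ 2) by (apply Rmult_le_pos; apply pow2_ge_0). lra.
      assert (sin (th x) ^ 2 <= 1) by nra. assert (cos (th x) ^ 2 <= 1) by nra.
      assert (0 <= sin (th x) ^ 2) by apply pow2_ge_0. nra. }
    assert (Rabs (sin (al x - th x)) <= 1) by (apply Rabs_le; lra).
    pose proof (Rabs_pos (sin (th x) ^ 2 * cos (th x) ^ 2)). pose proof (Rabs_pos (sin (al x - th x))).
    assert (Rabs (sin (th x) ^ 2 * cos (th x) ^ 2) * Rabs (sin (al x - th x)) <= 1) by nra. nra. }
  apply Rabs_le. split.
  - assert (K := mvt_lo (Kf p q th) _ a b (- (6 * (INR q + INR p))) Hab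
      (fun s => dK p q th al s H) (fun x _ => proj1 (proj1 (Rabs_le_between _ _) (Bd x)))).
    lra.
  - assert (K := mvt_hi (Kf p q th) _ a b ((6 * (INR q + INR p))) Hab
      (fun s => dK p q th al s H) (fun x _ => proj2 (proj1 (Rabs_le_between _ _) (Bd x)))).
    lra. Qed.

Lemma Ud_split p q th al x : Rabs (al x - th x) <= PI/2 ->
  Rabs (Ud p q th al x - cos (al x - th x) * Kf p q th x) <= (INR q + INR p + 3) * Rabs (al x - th x).
Proof. intros Hx. unfold Ud, Kf.
  replace (cos (al x - th x) * (INR q * cos (th x) ^ 2 - INR p * sin (th x) ^ 2) -
    (INR q + INR p + 3) * sin (th x) * cos (th x) * sin (al x - th x) -
    cos (al x - th x) * (INR q * cos (th x) ^ 2 - INR p * sin (th x) ^ 2))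
  with (- ((INR q + INR p + 3) * ((sin (th x) * cos (th x)) * sin (al x - th x)))) by ring.
  assert (0 <= INR q) by apply pos_INR. assert (0 <= INR p) by apply pos_INR.
  rewrite Rabs_Ropp, Rabs_mult, (Rabs_right (INR q + INR p + 3)) by lra.
  apply Rmult_le_compat_l. lra. rewrite Rabs_mult.
  destruct (jordan_abs _ Hx) as [_ J].
  assert (Rabs (sin (th x) * cos (th x)) <= 1).
  { pose proof (sin2_cos2 (th x)) as E; unfold Rsqr in E. apply Rabs_le. nra. }
  pose proof (Rabs_pos (sin (th x) * cos (th x))). pose proof (Rabs_pos (sin (al x - th x))). nra. Qed.

Lemma stepB p q th al s0 s1 : (1 <= p)%nat -> (1 <= q)%nat -> is_trajectory p q th al ->
  0 < th s0 < PI/2 -> s0 <= s1 -> - (PI/2) < al s1 - th s1 < PI/2 ->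
  forall eps, 0 < eps -> exists N, s1 <= N /\ forall t, N <= t -> Rabs (Kf p q th t) < eps.
Proof. intros hp hq H h0 Hs1 Hu1 eps Heps.
  destruct (region p q th al s0 s1 hp hq H h0 Hs1 Hu1) as [Q1p Rg].
  set (Q1 := Qf p q th al s1) in *. clearbody Q1.
  assert (Hq0 : 0 <= INR q) by apply pos_INR. assert (Hp0 : 0 <= INR p) by apply pos_INR.
  set (Bk := 6 * (INR q + INR p) + 1).
  assert (HB : 0 < Bk) by (unfold Bk; lra).
  set (d := eps / (2 * Bk)).
  assert (Hd : 0 < d) by (unfold d; apply Rdiv_lt_0_compat; lra).
  assert (HdB : Bk * d = eps / 2) by (unfold d; field; lra).
  set (nn := INR q + INR p + 3).
  assert (Hnn : 0 < nn) by (unfold nn; lra).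
  set (eA := Rmin (Q1 * eps / (4 * nn)) (Q1 * eps * d / 8)).
  assert (HeA : 0 < eA).
  { unfold eA. apply Rmin_glb_lt. apply Rdiv_lt_0_compat; nra.
    apply Rdiv_lt_0_compat; [|lra]. apply Rmult_lt_0_compat; [nra | lra]. }
  assert (eA1 : nn * eA <= Q1 * eps / 4).
  { assert (E : eA <= Q1 * eps / (4 * nn)) by apply Rmin_l.
    apply Rmult_le_compat_l with (r := nn) in E; [|lra].
    replace (nn * (Q1 * eps / (4 * nn))) with (Q1 * eps / 4) in E by (field; lra). exact E. }
  assert (eA2 : eA <= Q1 * eps * d / 8) by apply Rmin_r.
  destruct (stepA p q th al s0 s1 hp hq H h0 Hs1 Hu1 eA HeA) as [N0 [HN0 UN]].
  apply NNPP; intro Hn.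
  assert (Hinf : forall N, exists t, N <= t /\ eps <= Rabs (Kf p q th t)).
  { intro N. apply NNPP; intro K. apply Hn. exists (Rmax N s1). split. apply Rmax_r.
    intros t Ht. apply Rnot_le_lt; intro E. apply K. exists t. split; [|exact E].
    eapply Rle_trans; [apply Rmax_l | exact Ht]. }
  destruct (Hinf N0) as [t [Ht Et]].
  assert (Kx : forall x, t <= x <= t + d -> Rabs (Kf p q th x - Kf p q th t) <= eps / 2).
  { intros x Hx. pose proof (K_lip p q th al t x H ltac:(lra)).
    assert (6 * (INR q + INR p) * (x - t) <= Bk * d).
    { apply Rmult_le_compat; unfold Bk; lra. } lra. }
  assert (Ux : forall x, t <= x <= t + d ->
     Rabs (Ud p q th al x - cos (al x - th x) * Kf p q th x) <= Q1 * eps / 4 /\ Q1 <= cos (al x - th x)).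
  { intros x Hx. destruct (Rg x ltac:(lra)) as [_ [_ [R3 [R4 _]]]].
    split; [|exact R3].
    assert (E1 : Rabs (al x - th x) <= PI/2) by (apply Rabs_le; lra).
    pose proof (Ud_split p q th al x E1) as E2. fold nn in E2.
    assert (E3 : Rabs (al x - th x) < eA) by (apply UN; lra).
    assert (nn * Rabs (al x - th x) <= nn * eA) by (apply Rmult_le_compat_l; lra). lra. }
  assert (Ut : Rabs (al t - th t) < eA) by (apply UN; lra).
  assert (Utd : Rabs (al (t+d) - th (t+d)) < eA) by (apply UN; lra).
  apply Rabs_def2 in Ut. apply Rabs_def2 in Utd.
  destruct (Rle_or_lt 0 (Kf p q th t)) as [Kp|Kn].
  - rewrite Rabs_right in Et by lra.
    assert (K := mvt_lo (fun s => al s - th s) (Ud p q th al) t (t+d) (Q1 * eps / 4) ltac:(lra)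
      (fun s => dU p q th al s H)).
    cbv beta in K.
    assert (E5 : Q1 * eps / 4 * (t + d - t) <= al (t + d) - th (t + d) - (al t - th t)).
    { apply K. intros x Hx. destruct (Ux x Hx) as [U1 U2]. pose proof (Kx x Hx) as E4.
      apply Rabs_le_between in U1. apply Rabs_le_between in E4.
      assert (Q1 * (eps/2) <= cos (al x - th x) * Kf p q th x) by nra. lra. }
    replace (t + d - t) with d in E5 by ring. nra.
  - rewrite Rabs_left in Et by lra.
    assert (K := mvt_hi (fun s => al s - th s) (Ud p q th al) t (t+d) (- (Q1 * eps / 4)) ltac:(lra)
      (fun s => dU p q th al s H)).
    cbv beta in K.
    assert (E5 : al (t + d) - th (t + d) - (al t - th t) <= - (Q1 * eps / 4) * (t + d - t)).
    { apply K. intros x Hx. destruct (Ux x Hx) as [U1 U2]. pose proof (Kx x Hx) as E4.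
      apply Rabs_le_between in U1. apply Rabs_le_between in E4.
      assert (cos (al x - th x) * Kf p q th x <= - (Q1 * (eps/2))) by nra. lra. }
    replace (t + d - t) with d in E5 by ring. nra.
Qed.

Lemma alpha0_facts p q : (1 <= p)%nat -> (1 <= q)%nat ->
  0 < alpha0 p q < PI/2 /\ 0 < sin (alpha0 p q) /\ 0 < cos (alpha0 p q) /\
  INR q * cos (alpha0 p q) ^ 2 - INR p * sin (alpha0 p q) ^ 2 = 0.
Proof. intros hp hq. pose proof PI_RGT_0.
  assert (Hp : 0 < INR p) by (apply lt_0_INR; lia).
  assert (Hq : 0 < INR q) by (apply lt_0_INR; lia).
  set (x := sqrt (INR q / INR p)).
  assert (Hx : 0 < x) by (apply sqrt_lt_R0; apply Rdiv_lt_0_compat; lra).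
  assert (Hx2 : x * x = INR q / INR p) by (apply sqrt_sqrt; left; apply Rdiv_lt_0_compat; lra).
  unfold alpha0. fold x.
  assert (A1 : 0 < atan x) by (rewrite <- atan_0; apply atan_increasing; lra).
  assert (A2 : atan x < PI/2) by (pose proof (atan_bound x); lra).
  assert (C : 0 < cos (atan x)) by (apply cos_gt_0; lra).
  assert (T : sin (atan x) = x * cos (atan x)).
  { assert (E : sin (atan x) = tan (atan x) * cos (atan x)) by (unfold tan; field; lra).
    rewrite tan_atan in E. exact E. }
  repeat split; try lra.
  - rewrite T. apply Rmult_lt_0_compat; lra.
  - rewrite T. replace (INR q * cos (atan x) ^ 2 - INR p * (x * cos (atan x)) ^ 2)
      with (cos (atan x) ^ 2 * (INR q - INR p * (x * x))) by ring.
    rewrite Hx2. field_simplify; [ring | lra]. Qed.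

Lemma K_ident p q a S C : 0 < INR q -> S^2 + C^2 = 1 -> sin a ^ 2 + cos a ^ 2 = 1 ->
  INR q * cos a ^ 2 - INR p * sin a ^ 2 = 0 ->
  INR q * C ^ 2 - INR p * S ^ 2 = - (INR q + INR p) * ((S * cos a + C * sin a) * (S * cos a - C * sin a)).
Proof. intros _ H1 H2 H3.
  assert (E : (S^2 + C^2) * (INR q * cos a ^ 2 - INR p * sin a ^ 2) = 0) by (rewrite H3; ring).
  assert (E2 : (INR q * C ^ 2 - INR p * S ^ 2) * (sin a ^ 2 + cos a ^ 2 - 1) = 0) by (rewrite H2; ring).
  lra. Qed.

Lemma thlim p q th al s0 s1 : (1 <= p)%nat -> (1 <= q)%nat -> is_trajectory p q th al ->
  0 < th s0 < PI/2 -> s0 <= s1 -> - (PI/2) < al s1 - th s1 < PI/2 ->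
  forall eps, 0 < eps -> exists N, s1 <= N /\ forall t, N <= t -> Rabs (th t - alpha0 p q) < eps.
Proof. intros hp hq H h0 Hs1 Hu1 eps Heps. pose proof PI_RGT_0.
  destruct (region p q th al s0 s1 hp hq H h0 Hs1 Hu1) as [Q1p Rg].
  set (Q1 := Qf p q th al s1) in *. clearbody Q1.
  destruct (alpha0_facts p q hp hq) as [[a1 a2] [sa [ca k0]]].
  set (a := alpha0 p q) in *. clearbody a.
  assert (Hp : 1 <= INR p) by (apply (le_INR 1); lia).
  assert (Hq : 1 <= INR q) by (apply (le_INR 1); lia).
  destruct (stepB p q th al s0 s1 hp hq H h0 Hs1 Hu1 (eps * Q1 * sin a / 3)) as [N [HN KN]].
  { apply Rmult_lt_0_compat; [|lra]. repeat apply Rmult_lt_0_compat; lra. }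
  exists N. split; auto. intros t Ht.
  specialize (KN t Ht). destruct (Rg t ltac:(lra)) as [R1 [R2 [_ [R4 _]]]].
  destruct (theta_stay p q th al s0 H h0 t ltac:(lra)) as [T1 T2].
  unfold Kf in KN.
  rewrite (K_ident p q a (sin (th t)) (cos (th t))) in KN; try lra.
  2:{ pose proof (sin2_cos2 (th t)) as E; unfold Rsqr in E; nra. }
  2:{ pose proof (sin2_cos2 a) as E; unfold Rsqr in E; nra. }
  rewrite <- sin_plus, <- sin_minus in KN.
  assert (Hd : Rabs (th t - a) <= PI/2) by (apply Rabs_le; lra).
  destruct (jordan_abs _ Hd) as [J _].
  assert (Sp : Q1 * sin a <= sin (th t + a)).
  { rewrite sin_plus. assert (0 < sin (th t)) by (apply sin_gt_0; lra).
    assert (0 <= sin (th t) * cos a) by nra. nra. }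
  rewrite Rabs_mult, Rabs_Ropp, Rabs_mult, (Rabs_right (INR q + INR p)), (Rabs_right (sin (th t + a))) in KN by nra.
  assert (0 < Q1 * sin a) by nra.
  pose proof (Rabs_pos (sin (th t - a))). pose proof (Rabs_pos (th t - a)).
  assert (Q1 * sin a * Rabs (sin (th t - a)) <= (INR q + INR p) * (sin (th t + a) * Rabs (sin (th t - a)))).
  { assert (sin (th t + a) * Rabs (sin (th t - a)) <= (INR q + INR p) * (sin (th t + a) * Rabs (sin (th t - a)))).
    { assert (0 <= sin (th t + a) * Rabs (sin (th t - a))) by nra. nra. }
    nra. }
  nra. Qed.

Lemma lim_p (f : R -> R) (l : R) : (forall eps, 0 < eps -> exists M, forall x, M <= x -> Rabs (f x - l) < eps) -> is_lim f p_infty l.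
Proof. intros H P [eps He]. destruct (H eps (cond_pos eps)) as [M HM]. exists M. intros x Hx. apply He. apply HM. lra. Qed.

Theorem lemma4p10 (p q : nat) (hp : (1 <= p)%nat) (hq : (1 <= q)%nat)
  (theta alpha : R -> R) (s0 : R)
  (htraj : is_trajectory p q theta alpha)
  (h1 : 0 < theta s0) (h2 : theta s0 < PI / 2)
  (h3 : theta s0 - PI / 2 <= alpha s0) (h4 : alpha s0 <= theta s0 + PI / 2) :
  is_lim theta p_infty (alpha0 p q) /\ is_lim alpha p_infty (alpha0 p q).
Proof.
  assert (h0 : 0 < theta s0 < PI/2) by lra.
  destruct (start p q theta alpha s0 htraj h0 (conj h3 h4)) as [s1 [Hs1 Hu1]].
  split.
  - apply lim_p. intros eps Heps.
    destruct (thlim p q theta alpha s0 s1 hp hq htraj h0 Hs1 Hu1 eps Heps) as [N [_ HN]].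
    exists N. exact HN.
  - apply lim_p. intros eps Heps.
    destruct (thlim p q theta alpha s0 s1 hp hq htraj h0 Hs1 Hu1 (eps/2) ltac:(lra)) as [N1 [_ HN1]].
    destruct (stepA p q theta alpha s0 s1 hp hq htraj h0 Hs1 Hu1 (eps/2) ltac:(lra)) as [N2 [_ HN2]].
    exists (Rmax N1 N2). intros x Hx.
    specialize (HN1 x (Rle_trans _ _ _ (Rmax_l _ _) Hx)).
    specialize (HN2 x (Rle_trans _ _ _ (Rmax_r _ _) Hx)).
    replace (alpha x - alpha0 p q) with ((alpha x - theta x) + (theta x - alpha0 p q)) by ring.
    pose proof (Rabs_triang (alpha x - theta x) (theta x - alpha0 p q)). lra.
Qed.
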